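(* Let $M$ be a monoid, let $\sigma : X^+ \to M$ be a semigroup choice of generators for $M$, and let $\tau : X^* \to M$ be the unique extension of $\sigma$ to a monoid choice of generators. Then $$L_\sigma(M) = L_\tau(M) \cap \big(X \hat{X}^* \overline{X} \cup \{\epsilon\}\big),$$ and there exists a word $w \in X^+$ such that $$L_\tau(M) = \{u \in \hat{X}^* : w u \overline{w} \in L_\sigma(M)\}.$$
   Context: Maps are written on the right. $X^*$, $X^+$: free monoid (with empty word $\epsilon$) and free semigroup on $X$. Let $\overline{X} = \{\overline{x} : x \in X\}$ be new symbols, $\hat{X} = X \cup \overline{X}$, and extend $x \mapsto \overline{x}$ to an involution of $\hat{X}^*$ by $\overline{\overline{x}} = x$ and $\overline{x_1 \cdots x_n} = \overline{x_n}\cdots\overline{x_1}$. For a monoid $M$ and surjective monoid morphism $\tau : X^* \to M$, the loop automaton has vertex set $M$, for each $a \in M$, $x \in X$ an edge $a \to a(x\tau)$ labelled $x$ and an edge $a(x\tau) \to a$ labelled $\overline{x}$; the loop problem $L_\tau(M) \subseteq \hat{X}^*$ is the set of labels of paths from the identity to the identity. For a semigroup $S$ (here $S = M$ regarded as a semigroup) and surjective morphism $\sigma : X^+ \to S$, $L_\sigma(S)$ is the loop problem of $S^1$ ($S$ with a new identity adjoined, even though $M$ already has one) with respect to the unique extension $\sigma^1 : X^* \to S^1$. *)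

(* Defs.v *)
From Stdlib Require Import List.
Import ListNotations.
Set Implicit Arguments.

(* Letters of \hat X = X ∪ \bar X: [inl x] is x, [inr x] is \bar x. *)
Definition hat (X : Type) : Type := (X + X)%type.

Definition pos (X : Type) (w : list X) : list (hat X) := map (@inl X X) w.

Definition bar_letter (X : Type) (a : hat X) : hat X :=
  match a with inl x => inr x | inr x => inl x end.
Definition bar_word (X : Type) (u : list (hat X)) : list (hat X) :=
  rev (map (@bar_letter X) u).

Definition evalw (T X : Type) (mul : T -> T -> T) (one : T) (g : X -> T)
  (w : list X) : T := fold_right (fun x m => mul (g x) m) one w.

(* Paths in the loop automaton of (T, mul, one) w.r.t. generator images g:
   edges a --x--> a (x g) and a (x g) --\bar x--> a.
   [lpath a u b] : there is a path from a to b labelled u. *)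
Fixpoint lpath (T X : Type) (mul : T -> T -> T) (g : X -> T)
  (a : T) (u : list (hat X)) (b : T) : Prop :=
  match u with
  | [] => a = b
  | inl x :: u' => lpath mul g (mul a (g x)) u' b
  | inr x :: u' => exists a', mul a' (g x) = a /\ lpath mul g a' u' b
  end.

Definition loop_problem (T X : Type) (mul : T -> T -> T) (one : T) (g : X -> T)
  (u : list (hat X)) : Prop := lpath mul g one u one.

(* S^1 : the semigroup S with a new identity adjoined ([None]). *)
Definition mul1 (S : Type) (mul : S -> S -> S) (a b : option S) : option S :=
  match a, b with
  | None, _ => b
  | _, None => a
  | Some a', Some b' => Some (mul a' b')
  end.

Definition L_monoid (M X : Type) (mul : M -> M -> M) (one : M) (g : X -> M)
  : list (hat X) -> Prop := loop_problem mul one g.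

(* L_sigma(M) for the semigroup choice sigma : X^+ -> M, x sigma = g x:
   loop problem of M^1 (new identity adjoined) w.r.t. sigma^1. *)
Definition L_semigroup (M X : Type) (mul : M -> M -> M) (g : X -> M)
  : list (hat X) -> Prop :=
  loop_problem (@mul1 M mul) None (fun x => Some (g x)).

Definition XhatXbarX (X : Type) (u : list (hat X)) : Prop :=
  u = [] \/ exists x y v, u = inl x :: v ++ [inr y].

(* Main.v *)
Require Import Defs.
From Stdlib Require Import List.
Import ListNotations.

Lemma lpath_app (T X : Type) (mul : T -> T -> T) (g : X -> T) u v a b :
  lpath mul g a (u ++ v) b <-> exists c, lpath mul g a u c /\ lpath mul g c v b.
Proof.
  revert a; induction u as [|[x|x] u IH]; intros a; simpl.
  - split; [intros H; exists a; auto | intros [c [-> H]]; auto].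
  - rewrite IH. split; intros [c [H1 H2]]; eauto.
  - split.
    + intros [a' [E H]]. apply IH in H as [c [H1 H2]]. eauto.
    + intros [c [[a' [E H1]] H2]]. exists a'. split; auto. apply IH. eauto.
Qed.

Lemma lpath_rev (T X : Type) (mul : T -> T -> T) (g : X -> T) u a b :
  lpath mul g a u b -> lpath mul g b (bar_word u) a.
Proof.
  revert a; induction u as [|[x|x] u IH]; intros a H; simpl in *.
  - subst; reflexivity.
  - unfold bar_word in *; simpl. apply lpath_app. exists (mul a (g x)).
    split; [apply IH; auto|]. simpl. exists a. auto.
  - destruct H as [a' [E H]]. unfold bar_word in *; simpl. apply lpath_app.
    exists a'. split; [apply IH; auto|]. simpl. auto.
Qed.

Section S.
Variables (M X : Type) (mul : M -> M -> M) (one : M)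
  (mulA : forall a b c, mul a (mul b c) = mul (mul a b) c)
  (mul1m : forall a, mul one a = a) (mulm1 : forall a, mul a one = a)
  (g : X -> M).

Definition fo (o : option M) : M := match o with None => one | Some a => a end.

Lemma proj u a b : lpath (mul1 mul) (fun x => Some (g x)) a u b ->
  lpath mul g (fo a) u (fo b).
Proof.
  revert a; induction u as [|[x|x] u IH]; intros a H; simpl in *.
  - subst; reflexivity.
  - apply IH in H. destruct a; simpl in *; auto. rewrite mul1m. auto.
  - destruct H as [a' [E H]]. exists (fo a'). split; auto.
    subst. destruct a'; simpl; auto.
Qed.

Lemma lift u a b : lpath mul g a u b ->
  lpath (mul1 mul) (fun x => Some (g x)) (Some a) u (Some b).
Proof.
  revert a; induction u as [|[x|x] u IH]; intros a H; simpl in *.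
  - subst; reflexivity.
  - apply IH in H. auto.
  - destruct H as [a' [E H]]. exists (Some a'). simpl. subst. auto.
Qed.

Lemma posw w a b : lpath mul g a (pos w) b <-> b = mul a (evalw mul one g w).
Proof.
  revert a; induction w as [|x w IH]; intros a; simpl.
  - rewrite mulm1. split; auto.
  - rewrite IH, mulA. tauto.
Qed.

Lemma none_inr x u b : ~ lpath (mul1 mul) (fun x => Some (g x)) None (inr x :: u) b.
Proof. simpl. intros [a' [E _]]. destruct a'; discriminate. Qed.

End S.

Theorem proposition4p7
  (M X : Type) (mul : M -> M -> M) (one : M)
  (mulA : forall a b c, mul a (mul b c) = mul (mul a b) c)
  (mul1m : forall a, mul one a = a) (mulm1 : forall a, mul a one = a)
  (g : X -> M)
  (* sigma : X^+ -> M, x sigma = g x, is surjective *)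
  (sigma_surj : forall m : M, exists w : list X, w <> [] /\ evalw mul one g w = m) :
  (forall u : list (hat X),
     L_semigroup mul g u <-> (L_monoid mul one g u /\ XhatXbarX u)) /\
  (exists w : list X, w <> [] /\
     forall u : list (hat X),
       L_monoid mul one g u <-> L_semigroup mul g (pos w ++ u ++ bar_word (pos w))).
Proof.
  unfold L_semigroup, L_monoid, loop_problem, XhatXbarX.
  split.
  - intros u. split.
    + intros H. split.
      * apply (@proj M X mul one mul1m g) in H. exact H.
      * destruct u as [|[x|x] u]; [left; reflexivity| |exfalso; eapply none_inr; eauto].
        right. destruct (rev u) as [|l v] eqn:E.
        -- apply (f_equal (@rev _)) in E. rewrite rev_involutive in E. subst u.
           simpl in H. discriminate.
        -- apply (f_equal (@rev _)) in E. rewrite rev_involutive in E. simpl in E. subst u.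
           simpl in H. apply lpath_app in H as [c [_ H]].
           destruct l as [y|y].
           ++ simpl in H. destruct c; discriminate.
           ++ exists x, y, (rev v). reflexivity.
    + intros [H [->|[x [y [v ->]]]]]; [reflexivity|].
      simpl in H |- *. rewrite mul1m in H.
      apply lpath_app in H as [c [H1 H2]]. apply lpath_app.
      simpl in H2. destruct H2 as [a' [E ->]]. rewrite mul1m in E. subst c.
      exists (Some (g y)). split.
      * apply (@lift M X mul g) in H1. exact H1.
      * simpl. exists None. split; reflexivity.
  - destruct (sigma_surj one) as [w [Hw Ew]]. exists w. split; auto.
    intros u. split.
    + intros H. apply lpath_app. exists (Some one). split.
      * destruct w as [|x w]; [congruence|]. simpl. apply (@lift M X mul g).
        apply (@posw M X mul one mulA mulm1 g). simpl in Ew. rewrite Ew. reflexivity.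
      * apply lpath_app. exists (Some one). split.
        -- apply (@lift M X mul g). exact H.
        -- apply lpath_rev. destruct w as [|x w]; [congruence|]. simpl. apply (@lift M X mul g).
           apply (@posw M X mul one mulA mulm1 g). simpl in Ew. rewrite Ew. reflexivity.
    + intros H. apply (@proj M X mul one mul1m g) in H. simpl in H.
      apply lpath_app in H as [c [H1 H2]]. apply lpath_app in H2 as [d [H2 H3]].
      apply (@posw M X mul one mulA mulm1 g) in H1. rewrite mul1m, Ew in H1. subst c.
      apply lpath_rev in H3. unfold bar_word in H3. rewrite map_rev, rev_involutive in H3.
      replace (map (@bar_letter X) (map (@bar_letter X) (pos w))) with (pos w) in H3.
      2:{ rewrite map_map. clear. induction (pos w) as [|[x|x] l IH]; simpl; congruence. }
      apply (@posw M X mul one mulA mulm1 g) in H3. rewrite mul1m, Ew in H3. subst d. exact H2.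
Qed.
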